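(* Let $\gamma_1,\gamma_2\in[0,1)$, $\beta\ge0$, let $q_1^\star$ be the unique solution of $b_1(q_1)=0$ and $q_2^\star$ the unique solution of $b_2(q_1^\star,q_2)=0$, and let $\pi_2^\star$ be the policy induced by $q_2^\star$. Suppose $l_1^\star,l_2^\star:\mathcal S\times\mathcal A\to\mathbb R$ with $l_2^\star\ge0$ satisfy, for all functions $h$ on $\mathcal S\times\mathcal A$, $$\langle l_2^\star,(I-\gamma_2P_2^{\pi_2^\star})h\rangle_{\rho_2}=\langle q_2^\star,h\rangle_{\rho_2},\qquad \langle l_1^\star,(I-\gamma_1P_1^\mu)h\rangle_{\rho_1}=\beta\langle q_1^\star,h\rangle_{\rho_1}+\langle l_2^\star,(I-\Pi_\mu)h\rangle_{\rho_2}.$$ Then $(q_1^\star,q_2^\star,l_1^\star,l_2^\star)$ is a saddle point of $\mathcal L^\beta_{\rm coup}$, i.e. $\mathcal L^\beta_{\rm coup}(q_1^\star,q_2^\star,l_1,l_2)\le \mathcal L^\beta_{\rm coup}(q_1^\star,q_2^\star,l_1^\star,l_2^\star)\le\mathcal L^\beta_{\rm coup}(q_1,q_2,l_1^\star,l_2^\star)$ for all $q_1,q_2,l_1,l_2$, and for every $(q_1,q_2)$, $$\mathcal L^\beta_{\rm coup}(q_1,q_2,l_1^\star,l_2^\star)-\mathcal L^\beta_{\rm coup}(q_1^\star,q_2^\star,l_1^\star,l_2^\star)\ge\frac\beta2\|q_1-q_1^\star\|_{\rho_1}^2+\frac12\|q_2-q_2^\star\|_{\rho_2}^2.$$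
   Context: Setup: $\mathcal S$ and $\mathcal A$ are finite sets; functions on $\mathcal S\times\mathcal A$ are real vectors. For a probability distribution $\rho$ on $\mathcal S\times\mathcal A$, $\langle f,h\rangle_\rho=\sum_{s,a}\rho(s,a)f(s,a)h(s,a)$, $\|f\|_\rho^2=\langle f,f\rangle_\rho$; $\rho_1,\rho_2$ are probability distributions on $\mathcal S\times\mathcal A$. $P_1,P_2$ are transition kernels. $\mu$ is an anchor policy, $g:\mathcal S\to\mathbb R$, $C\in\mathbb R$, $u_g^\star$ a given function on $\mathcal S\times\mathcal A$. $(\Pi_\mu q)(s,a):=\sum_{a'}\mu(a'\mid s)q(s,a')$; $(P_1^\mu q)(s,a):=\sum_{s'}P_1(s'\mid s,a)\sum_{a'}\mu(a'\mid s')q(s',a')$; for $v:\mathcal S\to\mathbb R$, $(P_2v)(s,a):=\sum_{s'}P_2(s'\mid s,a)v(s')$; for a policy $\pi$, $(P_2^\pi h)(s,a):=\sum_{s'}P_2(s'\mid s,a)\sum_{a'}\pi(a'\mid s')h(s',a')$. With $\tau_2>0$ and full-support $\pi_{2,\rm ref}$, $\Omega(q)(s):=\tau_2\log\sum_a\pi_{2,\rm ref}(a\mid s)e^{q(s,a)/\tau_2}$, and the policy induced by $q$ is $\pi_q(a\mid s)=\pi_{2,\rm ref}(a\mid s)e^{q(s,a)/\tau_2}/\sum_{a'}\pi_{2,\rm ref}(a'\mid s)e^{q(s,a')/\tau_2}$. Residuals $b_1(q_1):=u_g^\star+\gamma_1P_1^\mu q_1-q_1$, $b_2(q_1,q_2):=(I-\Pi_\mu)q_1+g+C+\gamma_2P_2\Omega(q_2)-q_2$.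 Coupled Lagrangian: $\mathcal L^\beta_{\rm coup}(q_1,q_2,l_1,l_2):=\frac\beta2\|q_1\|_{\rho_1}^2+\frac12\|q_2\|_{\rho_2}^2+\langle l_1,b_1(q_1)\rangle_{\rho_1}+\langle l_2,b_2(q_1,q_2)\rangle_{\rho_2}$. *)

(* Defs.v *)
From HB Require Import structures.
From mathcomp Require Import all_boot all_order all_algebra.
From mathcomp Require Import reals sequences exp.
Set Implicit Arguments. Unset Strict Implicit. Unset Printing Implicit Defensive.
Import Order.TTheory GRing.Theory Num.Theory.
Local Open Scope ring_scope.

Section Defs.
Variables (R : realType) (S A : finType).

Definition ip (rho f h : S -> A -> R) : R :=
  \sum_(s : S) \sum_(a : A) rho s a * f s a * h s a.
Definition nrm2 (rho f : S -> A -> R) : R := ip rho f f.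

Definition is_dist (rho : S -> A -> R) : Prop :=
  (forall s a, 0 <= rho s a) /\ \sum_(s : S) \sum_(a : A) rho s a = 1.
(* transition kernel: P s a s' = P(s' | s, a) *)
Definition is_kernel (P : S -> A -> S -> R) : Prop :=
  forall s a, (forall s', 0 <= P s a s') /\ \sum_(s' : S) P s a s' = 1.
(* policy: pi s a = pi(a | s) *)
Definition is_policy (pi : S -> A -> R) : Prop :=
  forall s, (forall a, 0 <= pi s a) /\ \sum_(a : A) pi s a = 1.

Definition PiMu (mu : S -> A -> R) (q : S -> A -> R) : S -> A -> R :=
  fun s _ => \sum_(a' : A) mu s a' * q s a'.
Definition Ppol (P : S -> A -> S -> R) (pi : S -> A -> R) (q : S -> A -> R)
  : S -> A -> R :=
  fun s a => \sum_(s' : S) P s a s' * \sum_(a' : A) pi s' a' * q s' a'.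
Definition Pv (P : S -> A -> S -> R) (v : S -> R) : S -> A -> R :=
  fun s a => \sum_(s' : S) P s a s' * v s'.

Definition Omega (tau : R) (piref : S -> A -> R) (q : S -> A -> R) : S -> R :=
  fun s => tau * ln (\sum_(a : A) piref s a * expR (q s a / tau)).
Definition pol_of (tau : R) (piref : S -> A -> R) (q : S -> A -> R)
  : S -> A -> R :=
  fun s a => piref s a * expR (q s a / tau) /
             \sum_(a' : A) piref s a' * expR (q s a' / tau).

Definition b1 (ug : S -> A -> R) (gamma1 : R) (P1 : S -> A -> S -> R)
  (mu : S -> A -> R) (q1 : S -> A -> R) : S -> A -> R :=
  fun s a => ug s a + gamma1 * Ppol P1 mu q1 s a - q1 s a.

Definition b2 (mu : S -> A -> R) (g : S -> R) (C gamma2 : R)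
  (P2 : S -> A -> S -> R) (tau2 : R) (piref : S -> A -> R)
  (q1 q2 : S -> A -> R) : S -> A -> R :=
  fun s a => (q1 s a - PiMu mu q1 s a) + g s + C
             + gamma2 * Pv P2 (Omega tau2 piref q2) s a - q2 s a.

Definition Lcoup (beta : R) (rho1 rho2 : S -> A -> R)
  (ug : S -> A -> R) (gamma1 : R) (P1 : S -> A -> S -> R) (mu : S -> A -> R)
  (g : S -> R) (C gamma2 : R) (P2 : S -> A -> S -> R) (tau2 : R)
  (piref : S -> A -> R) (q1 q2 l1 l2 : S -> A -> R) : R :=
  beta / 2 * nrm2 rho1 q1 + 1 / 2 * nrm2 rho2 q2
  + ip rho1 l1 (b1 ug gamma1 P1 mu q1)
  + ip rho2 l2 (b2 mu g C gamma2 P2 tau2 piref q1 q2).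

End Defs.

(* Main.v *)
Require Import Defs.
From HB Require Import structures.
From mathcomp Require Import all_boot all_order all_algebra.
From mathcomp Require Import reals sequences exp.
From mathcomp Require Import ring lra.
Import Order.TTheory GRing.Theory Num.Theory.
Local Open Scope ring_scope.

Lemma omega_conv (R : realType) (S A : finType) (tau : R) (piref q qs : S -> A -> R) s :
  0 < tau -> (forall s a, 0 < piref s a) ->
  \sum_(a : A) pol_of tau piref qs s a * (q s a - qs s a)
  <= Omega tau piref q s - Omega tau piref qs s.
Proof.
move=> tau0 pp.
case: (pickP (fun _ : A => true)) => [a0 _ | hnone]; last first.
  rewrite /Omega !big1 ?mulr0 ?subrr // => a; by have := hnone a.
set w := fun a => piref s a * expR (qs s a / tau).
have w0 : forall a, 0 < w a by move=> a; rewrite /w mulr_gt0 // expR_gt0.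
set Z := \sum_(a : A) w a.
have Z0 : 0 < Z.
  rewrite /Z (bigD1 a0) //= ltr_pwDl ?w0 // sumr_ge0 // => a _; exact: ltW.
set d := fun a => q s a - qs s a.
set m := (\sum_(a : A) w a / Z * d a) / tau.
have key : Z * expR m <= \sum_(a : A) piref s a * expR (q s a / tau).
  have -> : \sum_(a : A) piref s a * expR (q s a / tau) = \sum_(a : A) w a * expR (d a / tau).
    apply: eq_bigr => a _; rewrite /w /d -mulrA -expRD; congr (_ * expR _).
    by rewrite mulrBl addrC subrK.
  have le1 : forall a, w a * (expR m * (1 + (d a / tau - m))) <= w a * expR (d a / tau).
    move=> a; rewrite ler_pM2l ?w0 //.
    have -> : expR (d a / tau) = expR m * expR (d a / tau - m) by rewrite -expRD addrC subrK.
    by rewrite ler_pM2l ?expR_gt0 // expR_ge1Dx.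
  apply: le_trans (ler_sum _ (fun a _ => le1 a)).
  have -> : \sum_(a : A) w a * (expR m * (1 + (d a / tau - m)))
     = expR m * (Z + (\sum_(a : A) w a * d a) / tau - m * Z).
    rewrite (eq_bigr (fun a => expR m * (w a + (w a * d a) / tau - m * w a))); last first.
      by move=> a _; field; exact: lt0r_neq0.
    rewrite -mulr_sumr; congr (_ * _).
    by rewrite !big_split /= sumrN mulr_suml -mulr_sumr.
  have -> : (\sum_(a : A) w a * d a) / tau = m * Z.
    rewrite /m.
    have -> : \sum_(a : A) w a / Z * d a = (\sum_(a : A) w a * d a) / Z.
      rewrite mulr_suml; apply: eq_bigr => a _; field; exact: lt0r_neq0.
    field; rewrite ?lt0r_neq0 //.
  by rewrite addrK mulrC.
have S0 : 0 < \sum_(a : A) piref s a * expR (q s a / tau).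
  apply: lt_le_trans key; by rewrite mulr_gt0 // expR_gt0.
rewrite /Omega -/Z.
rewrite -(ler_ln (x:= Z * expR m)) ?posrE ?mulr_gt0 ?expR_gt0 // in key.
rewrite lnM ?posrE ?expR_gt0 // expRK in key.
have -> : \sum_(a : A) pol_of tau piref qs s a * (q s a - qs s a) = tau * m.
  rewrite /m mulrC -mulrA mulVf ?mulr1; last exact: lt0r_neq0.
  by apply: eq_bigr => a _; rewrite /pol_of.
rewrite -mulrBr ler_pM2l //; lra.
Qed.

Set Implicit Arguments. Unset Strict Implicit.
Section H.
Variables (R : realType) (S A : finType).
Implicit Types (rho f h q : S -> A -> R).

Lemma ip_sub rho f h1 h2 :
  ip rho f h1 - ip rho f h2 = ip rho f (fun s a => h1 s a - h2 s a).
Proof.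
rewrite /ip -sumrB; apply: eq_bigr => s _; rewrite -sumrB.
by apply: eq_bigr => a _; rewrite mulrBr.
Qed.

Lemma ip_zero rho f h : (forall s a, h s a = 0) -> ip rho f h = 0.
Proof. by move=> H; rewrite /ip big1 // => s _; rewrite big1 // => a _; rewrite H mulr0. Qed.

Lemma ip_le rho f h1 h2 : (forall s a, 0 <= rho s a * f s a) ->
  (forall s a, h1 s a <= h2 s a) -> ip rho f h1 <= ip rho f h2.
Proof.
move=> H0 H; rewrite /ip; apply: ler_sum => s _; apply: ler_sum => a _.
by rewrite ler_wpM2l.
Qed.

Lemma nrm2_ge0 rho f : (forall s a, 0 <= rho s a) -> 0 <= nrm2 rho f.
Proof.
move=> H; rewrite /nrm2 /ip; apply: sumr_ge0 => s _; apply: sumr_ge0 => a _.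
by rewrite -mulrA mulr_ge0 // -expr2 sqr_ge0.
Qed.

Lemma nrm2_split rho q qs :
  nrm2 rho q = nrm2 rho qs + nrm2 rho (fun s a => q s a - qs s a)
     + 2 * ip rho qs (fun s a => q s a - qs s a).
Proof.
apply/eqP; rewrite -subr_eq0 -addrA; apply/eqP.
rewrite /nrm2 /ip mulr_sumr -!big_split -sumrB /=; apply: big1 => s _.
rewrite mulr_sumr -!big_split -sumrB /=; apply: big1 => a _; ring.
Qed.

Lemma Ppol_sub (P : S -> A -> S -> R) (mu : S -> A -> R) q q' s a :
  Ppol P mu q s a - Ppol P mu q' s a = Ppol P mu (fun s a => q s a - q' s a) s a.
Proof.
rewrite /Ppol -sumrB; apply: eq_bigr => s' _; rewrite -mulrBr -sumrB; congr (_ * _).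
by apply: eq_bigr => a' _; rewrite mulrBr.
Qed.

Lemma PiMu_sub (mu : S -> A -> R) q q' s a :
  PiMu mu q s a - PiMu mu q' s a = PiMu mu (fun s a => q s a - q' s a) s a.
Proof. by rewrite /PiMu -sumrB; apply: eq_bigr => a' _; rewrite mulrBr. Qed.

End H.

Theorem theorem3p3 (R : realType) (S A : finType)
  (rho1 rho2 : S -> A -> R) (P1 P2 : S -> A -> S -> R)
  (mu piref : S -> A -> R) (g : S -> R) (C : R) (ug : S -> A -> R)
  (tau2 gamma1 gamma2 beta : R)
  (q1s q2s l1s l2s : S -> A -> R) :
  is_dist rho1 -> is_dist rho2 ->
  is_kernel P1 -> is_kernel P2 ->
  is_policy mu -> is_policy piref -> (forall s a, 0 < piref s a) ->
  0 < tau2 ->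
  0 <= gamma1 < 1 -> 0 <= gamma2 < 1 -> 0 <= beta ->
  (* q1* solves b1(q1) = 0 *)
  (forall s a, b1 ug gamma1 P1 mu q1s s a = 0) ->
  (* q2* solves b2(q1*, q2) = 0 *)
  (forall s a, b2 mu g C gamma2 P2 tau2 piref q1s q2s s a = 0) ->
  (forall s a, 0 <= l2s s a) ->
  (forall h : S -> A -> R,
     ip rho2 l2s (fun s a => h s a
        - gamma2 * Ppol P2 (pol_of tau2 piref q2s) h s a)
     = ip rho2 q2s h) ->
  (forall h : S -> A -> R,
     ip rho1 l1s (fun s a => h s a - gamma1 * Ppol P1 mu h s a)
     = beta * ip rho1 q1s h
       + ip rho2 l2s (fun s a => h s a - PiMu mu h s a)) ->
  let L := Lcoup beta rho1 rho2 ug gamma1 P1 mu g C gamma2 P2 tau2 piref in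
  (forall q1 q2 l1 l2 : S -> A -> R,
     L q1s q2s l1 l2 <= L q1s q2s l1s l2s /\
     L q1s q2s l1s l2s <= L q1 q2 l1s l2s) /\
  (forall q1 q2 : S -> A -> R,
     L q1 q2 l1s l2s - L q1s q2s l1s l2s >=
     beta / 2 * nrm2 rho1 (fun s a => q1 s a - q1s s a)
     + 1 / 2 * nrm2 rho2 (fun s a => q2 s a - q2s s a)).
Proof.
move=> [r1p _] [r2p _] _ P2k _ _ ppos tau0 _ /andP[g20 _] b0 Hb1 Hb2 l2p H2 H1 L.
have part2 : forall q1 q2 : S -> A -> R,
     L q1 q2 l1s l2s - L q1s q2s l1s l2s >=
     beta / 2 * nrm2 rho1 (fun s a => q1 s a - q1s s a)
     + 1 / 2 * nrm2 rho2 (fun s a => q2 s a - q2s s a).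
  move=> q1 q2; rewrite /L /Lcoup.
  rewrite (nrm2_split rho1 q1 q1s) (nrm2_split rho2 q2 q2s).
  rewrite (ip_zero _ _ (fun s a => Hb1 s a)) (ip_zero _ _ (fun s a => Hb2 s a)).
  have F2 : ip rho1 l1s (b1 ug gamma1 P1 mu q1) = - ip rho1 l1s
       (fun s a => (q1 s a - q1s s a) - gamma1 * Ppol P1 mu (fun s a => q1 s a - q1s s a) s a).
    rewrite /ip -sumrN; apply: eq_bigr => s _; rewrite -sumrN; apply: eq_bigr => a _.
    have e : b1 ug gamma1 P1 mu q1 s a = b1 ug gamma1 P1 mu q1 s a - b1 ug gamma1 P1 mu q1s s a
      by rewrite Hb1 subr0.
    rewrite e /b1 -Ppol_sub; ring.
  have F3 : ip rho2 l2s (fun s a => (q1 s a - q1s s a) - PiMu mu (fun s a => q1 s a - q1s s a) s a)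
      - ip rho2 l2s (fun s a => (q2 s a - q2s s a)
          - gamma2 * Ppol P2 (pol_of tau2 piref q2s) (fun s a => q2 s a - q2s s a) s a)
      <= ip rho2 l2s (b2 mu g C gamma2 P2 tau2 piref q1 q2).
    rewrite ip_sub; apply: ip_le => [s a|s a]; first by rewrite mulr_ge0.
    have e : b2 mu g C gamma2 P2 tau2 piref q1 q2 s a =
       b2 mu g C gamma2 P2 tau2 piref q1 q2 s a - b2 mu g C gamma2 P2 tau2 piref q1s q2s s a
      by rewrite Hb2 subr0.
    have K : Ppol P2 (pol_of tau2 piref q2s) (fun s a => q2 s a - q2s s a) s a
       <= Pv P2 (Omega tau2 piref q2) s a - Pv P2 (Omega tau2 piref q2s) s a.
      rewrite /Ppol /Pv -sumrB; apply: ler_sum => s' _; rewrite -mulrBr; apply: ler_wpM2l.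
      - by case: (P2k s a) => ->.
      - exact: (@omega_conv R S A tau2 piref q2 q2s s' tau0 ppos).
    have K' := ler_wpM2l g20 K.
    rewrite e /b2 -PiMu_sub; lra.
  have := H1 (fun s a => q1 s a - q1s s a).
  have := H2 (fun s a => q2 s a - q2s s a).
  rewrite F2; lra.
split=> //.
move=> q1 q2 l1 l2; split.
  rewrite /L /Lcoup !(ip_zero _ _ (fun s a => Hb1 s a)) !(ip_zero _ _ (fun s a => Hb2 s a)).
  by [].
have := part2 q1 q2.
have := nrm2_ge0 (fun s a => q1 s a - q1s s a) r1p.
have := nrm2_ge0 (fun s a => q2 s a - q2s s a) r2p.
move: b0; set N1 := nrm2 _ _; set N2 := nrm2 _ _.
move=> b0 n2 n1; have := mulr_ge0 b0 n1; lra.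
Qed.
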